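(* For $i=1,2$ let $\mathcal{D}_i=(\Omega_i,\mathcal{B}_i)$ be a supersimple $2$-$(n_i,4,\lambda_i)$ design satisfying property $(\triangle)$, such that $(\Omega_i,\mathcal{C}_i)$ is a regular two-graph where $\mathcal{C}_i$ is the set of collinear triples of $\mathcal{D}_i$, and $n_i>2\lambda_i+2$. Let $\infty_i\in\Omega_i$. If the derived graphs $\mathcal{G}_{\mathcal{D}_1,\infty_1}$ and $\mathcal{G}_{\mathcal{D}_2,\infty_2}$ are isomorphic as graphs, then $\mathcal{D}_1$ and $\mathcal{D}_2$ are isomorphic as designs.
   Context: A $2$-$(n,4,\lambda)$ design $(\Omega,\mathcal{B})$: $n$ points, a multiset of $4$-subsets (lines), every $2$-subset in exactly $\lambda$ lines; supersimple: distinct lines meet in at most two points. Property $(\triangle)$: if $B_1,B_2\in\mathcal{B}$ with $|B_1\cap B_2|=2$ then $B_1\triangle B_2\in\mathcal{B}$. Collinear triple: $3$-subset contained in a line. Regular two-graph: $(\Omega,\mathcal{C})$ is a $2$-$(n,3,\mu)$ design with every $4$-subset containing $0,2$ or $4$ members of $\mathcal{C}$. The derived graph $\mathcal{G}_{\mathcal{D},\infty}$ has vertex set $\Omega\setminus\{\infty\}$, with $a,b$ adjacent iff $\{\infty,a,b\}\in\mathcal{C}$. Two designs are isomorphic if there is a bijection between point sets mapping the lines of one onto the lines of the other. *)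

(* Defs.v *)
From mathcomp Require Import all_boot.
Set Implicit Arguments. Unset Strict Implicit. Unset Printing Implicit Defensive.

(* A design on the finite point set T is given by a multiset of lines,
   encoded by its multiplicity function B : {set T} -> nat
   (B b = number of copies of the block b). *)

Definition is_2design (T : finType) (k lam : nat) (B : {set T} -> nat) : Prop :=
  (forall b : {set T}, 0 < B b -> #|b| = k) /\
  (forall p : {set T}, #|p| = 2 -> \sum_(b : {set T} | p \subset b) B b = lam).

(* supersimple: distinct lines (including distinct copies of a repeated
   block) meet in at most two points. *)
Definition supersimple (T : finType) (B : {set T} -> nat) : Prop :=
  (forall b : {set T}, B b <= 1) /\
  (forall b1 b2 : {set T}, 0 < B b1 -> 0 < B b2 -> b1 != b2 ->
     #|b1 :&: b2| <= 2).

Definition symdiff (T : finType) (A C : {set T}) : {set T} :=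
  (A :\: C) :|: (C :\: A).

Definition prop_triangle (T : finType) (B : {set T} -> nat) : Prop :=
  forall b1 b2 : {set T}, 0 < B b1 -> 0 < B b2 -> #|b1 :&: b2| = 2 ->
    0 < B (symdiff b1 b2).

Definition collinear_triples (T : finType) (B : {set T} -> nat) : {set {set T}} :=
  [set t : {set T} | (#|t| == 3) && [exists b : {set T}, (0 < B b) && (t \subset b)]].

Definition regular_two_graph (T : finType) (C : {set {set T}}) : Prop :=
  (exists mu : nat, is_2design 3 mu (fun t => nat_of_bool (t \in C))) /\
  (forall q : {set T}, #|q| = 4 ->
     #|[set t in C | t \subset q]| \in [:: 0; 2; 4]).

Definition dvertex (T : finType) (inf : T) := {x : T | x != inf}.

Definition derived_adj (T : finType) (B : {set T} -> nat) (inf : T)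
  : rel (dvertex inf) :=
  fun a b => [set inf; val a; val b] \in collinear_triples B.
Arguments derived_adj [T] B inf.

Definition graph_isomorphic (V1 V2 : finType) (e1 : rel V1) (e2 : rel V2) : Prop :=
  exists g : V1 -> V2, bijective g /\ forall a b, e1 a b = e2 (g a) (g b).

Definition design_isomorphic (T1 T2 : finType)
  (B1 : {set T1} -> nat) (B2 : {set T2} -> nat) : Prop :=
  exists phi : T1 -> T2, bijective phi /\
    forall b : {set T1}, B2 (phi @: b) = B1 b.

(* Main.v *)
Require Import Defs.
From mathcomp Require Import all_boot zify.
Set Implicit Arguments. Unset Strict Implicit. Unset Printing Implicit Defensive.

Lemma neq_false (T : eqType) (x y : T) : x != y -> (x == y) = false /\ (y == x) = false.
Proof. by move=> h; split; [|rewrite eq_sym]; apply: negbTE. Qed.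
Ltac neqs :=
  repeat match goal with h : is_true (?x != ?y) |- _ =>
    let h1 := fresh "e" in let h2 := fresh "e" in
    destruct (@neq_false _ _ _ h) as [h1 h2]; clear h end.
Ltac rwneqs := rewrite ?eqxx /=;
   repeat match goal with h : (?x == ?y) = false |- context [?x == ?y] => progress rewrite h end;
   try match goal with h : (?x == ?x) = false |- _ => by rewrite eqxx in h end.
Ltac elimeq := repeat (case: eqP => [?|?]; try subst; rwneqs).
Ltac setsolve := neqs; apply/setP; intro; rewrite !inE; rwneqs; elimeq; rewrite ?orbT ?orbF ?andbT ?andbF //.

Definition coh (T : finType) (B : {set T} -> nat) (x y z : T) : bool :=
  [set x; y; z] \in collinear_triples B.

Definition cnt (T : finType) (B : {set T} -> nat) (e a b c d : T) : nat :=
  coh B e a b + coh B e a c + coh B e a d + coh B e b c + coh B e b d + coh B e c d.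

Lemma card3 (T : finType) (x y z : T) : x != y -> x != z -> y != z -> #|[set x; y; z]| = 3.
Proof.
move=> h1 h2 h3; rewrite setUC cardsU1 cards2 h1 !inE; neqs; by rwneqs.
Qed.

Lemma card4 (T : finType) (x y z w : T) : x != y -> x != z -> y != z ->
  x != w -> y != w -> z != w -> #|[set x; y; z; w]| = 4.
Proof.
move=> h1 h2 h3 h4 h5 h6; rewrite setUC cardsU1 card3 // !inE; neqs; by rwneqs.
Qed.

Lemma card3_neq (T : finType) (x y z : T) : #|[set x; y; z]| = 3 -> [/\ x != y, x != z & y != z].
Proof.
have [->|h1] := eqVneq x y.
  have -> : [set y; y; z] = [set y; z] by setsolve.
  by rewrite cards2; case: (y != z).
have [->|h2] := eqVneq x z.
  have -> : [set z; y; z] = [set z; y] by setsolve.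
  by rewrite cards2; case: (z != y).
have [->|h3] := eqVneq y z.
  have -> : [set x; z; z] = [set x; z] by setsolve.
  by rewrite cards2; case: (x != z).
by [].
Qed.

Lemma sub3 (T : finType) (x y z : T) (b : {set T}) :
  ([set x; y; z] \subset b) = [&& x \in b, y \in b & z \in b].
Proof.
apply/idP/idP.
  by move/subsetP => h; apply/and3P; split; apply: h; rewrite !inE eqxx ?orbT.
case/and3P => hx hy hz; apply/subsetP => w.
by rewrite !inE => /orP[/orP[]|] /eqP ->.
Qed.

Lemma coh12 (T : finType) (B : {set T} -> nat) x y z : coh B x y z = coh B y x z.
Proof. by rewrite /coh; have -> : [set x; y; z] = [set y; x; z] by setsolve. Qed.
Lemma coh23 (T : finType) (B : {set T} -> nat) x y z : coh B x y z = coh B x z y.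
Proof. by rewrite /coh; have -> : [set x; y; z] = [set x; z; y] by setsolve. Qed.

Lemma cohP (T : finType) (B : {set T} -> nat) x y z :
  reflect ([/\ x != y, x != z, y != z & exists2 b, 0 < B b & [&& x \in b, y \in b & z \in b]])
          (coh B x y z).
Proof.
rewrite /coh inE; apply: (iffP andP).
  move=> [/eqP /card3_neq [h1 h2 h3] /existsP [b /andP [hb hs]]].
  by split=> //; exists b; rewrite -?sub3.
move=> [h1 h2 h3 [b hb hs]]; split; first by rewrite card3.
by apply/existsP; exists b; rewrite hb sub3.
Qed.

Lemma coh_neq (T : finType) (B : {set T} -> nat) x y z :
  coh B x y z -> [/\ x != y, x != z & y != z].
Proof. by case/cohP. Qed.

Definition Char (T : finType) (B : {set T} -> nat) (q : {set T}) : Prop :=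
  exists a b c d, [/\ [&& a != b, a != c, a != d, b != c, b != d & c != d],
    q = [set a; b; c; d],
    [&& coh B a b c, coh B a b d, coh B a c d & coh B b c d] &
    forall e, e \notin [set a; b; c; d] -> ~~ odd (cnt B e a b c d)].

Section Design.
Variable T : finType.
Variable B : {set T} -> nat.
Variable lam : nat.
Hypothesis Hd : is_2design 4 lam B.
Hypothesis Hs : supersimple B.
Hypothesis Ht : prop_triangle B.
Hypothesis Hr : regular_two_graph (collinear_triples B).
Hypothesis Hn : 2 * lam + 2 < #|T|.

Lemma line_card b : 0 < B b -> #|b| = 4.
Proof. by case: Hd => h _; apply: h. Qed.

Lemma B01 b : B b = (0 < B b).
Proof. by case: Hs => h _; move: (h b); case: (B b) => [|[|]]. Qed.

Lemma line_eq3 b1 b2 x y z : 0 < B b1 -> 0 < B b2 -> x != y -> x != z -> y != z ->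
  [&& x \in b1, y \in b1 & z \in b1] -> [&& x \in b2, y \in b2 & z \in b2] -> b1 = b2.
Proof.
move=> h1 h2 hxy hxz hyz s1 s2; apply/eqP; apply: contraT => hne.
case: Hs => _ /(_ b1 b2 h1 h2 hne).
have : [set x; y; z] \subset b1 :&: b2.
  by rewrite sub3 !inE; case/and3P: s1 => -> -> ->; case/and3P: s2 => -> -> ->.
move/subset_leq_card; rewrite card3 //; lia.
Qed.

Lemma coh_line b x y z : 0 < B b -> x != y -> x != z -> y != z ->
  x \in b -> y \in b -> z \in b -> coh B x y z.
Proof. move=> hb h1 h2 h3 hx hy hz; apply/cohP; split=> //; exists b => //; by rewrite hx hy hz. Qed.

Lemma line_of x y z : coh B x y z -> exists2 b, 0 < B b & [/\ x \in b, y \in b & z \in b].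
Proof. case/cohP => _ _ _ [b hb hs]; exists b => //; by case/and3P: hs. Qed.

Lemma line_enum b x y z : 0 < B b -> x != y -> x != z -> y != z ->
  x \in b -> y \in b -> z \in b ->
  exists2 w, [/\ w != x, w != y & w != z] & b = [set x; y; z; w].
Proof.
move=> hb h1 h2 h3 hx hy hz.
have sb : [set x; y; z] \subset b by rewrite sub3 hx hy hz.
have : #|b :\: [set x; y; z]| == 1 by rewrite cardsD (setIidPr sb) line_card // card3.
case/cards1P => w hw.
have : w \in b :\: [set x; y; z] by rewrite hw set11.
rewrite !inE => /andP [hn hwb]; rewrite !negb_or in hn; case/andP: hn => /andP[n1 n2] n3.
exists w => //.
by rewrite -{1}(setID b [set x; y; z]) (setIidPr sb) hw.
Qed.

Lemma even_line_aux p x y s t e : 0 < B p ->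
  x != y -> x != s -> x != t -> y != s -> y != t -> s != t ->
  x \in p -> y \in p -> s \in p -> t \in p ->
  e != x -> e != y -> e != s -> e != t ->
  coh B e x y -> coh B e s t.
Proof.
move=> hp hxy hxs hxt hys hyt hst xp yp sp tp hex hey hes het hc.
have ep : e \notin p.
  have sb : [set x; y; s; t] \subset p.
    by apply/subsetP => w; rewrite !inE => /orP[/orP[/orP[]|]|] /eqP ->.
  have : [set x; y; s; t] == p by rewrite eqEcard sb line_card // card4.
  move/eqP <-; rewrite !inE; neqs; by rwneqs.
case: (line_of hc) => M hM [eM xM yM].
have hne : M != p by apply/eqP => eMp; rewrite -eMp eM in ep.
have sM : s \notin M.
  apply/negP => sM; move/eqP: hne; apply.
  by apply: (@line_eq3 _ _ x y s) => //; apply/and3P.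
have tM : t \notin M.
  apply/negP => tM; move/eqP: hne; apply.
  by apply: (@line_eq3 _ _ x y t) => //; apply/and3P.
have c2 : #|M :&: p| = 2.
  apply/eqP; rewrite eqn_leq; apply/andP; split.
    by case: Hs => _; apply.
  have : [set x; y] \subset M :&: p.
    by apply/subsetP => w; rewrite !inE => /orP[] /eqP ->; rewrite ?xM ?yM ?xp ?yp.
  by move/subset_leq_card; rewrite cards2 hxy.
have := Ht hM hp c2.
move=> hL; apply: (coh_line hL) => //; rewrite /symdiff !inE ?eM ?ep ?sM ?sp ?tM ?tp //.
Qed.

Lemma even_cnt_line p a b c d e : 0 < B p ->
  a != b -> a != c -> a != d -> b != c -> b != d -> c != d ->
  a \in p -> b \in p -> c \in p -> d \in p ->
  e != a -> e != b -> e != c -> e != d -> ~~ odd (cnt B e a b c d).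
Proof.
move=> hp h1 h2 h3 h4 h5 h6 ap bp cp dp e1 e2 e3 e4.
have E1 : coh B e a b = coh B e c d.
  apply/idP/idP; apply: even_line_aux; eauto; by rewrite eq_sym.
have E2 : coh B e a c = coh B e b d.
  apply/idP/idP; apply: even_line_aux; eauto; by rewrite eq_sym.
have E3 : coh B e a d = coh B e b c.
  apply/idP/idP; apply: even_line_aux; eauto; by rewrite eq_sym.
rewrite /cnt E1 E2 E3 !oddD !oddb.
by case: (coh B e c d); case: (coh B e b d); case: (coh B e b c).
Qed.

Lemma par4 a b c d : a != b -> a != c -> a != d -> b != c -> b != d -> c != d ->
  ~~ odd (coh B a b c + coh B a b d + coh B a c d + coh B b c d).
Proof.
move=> h1 h2 h3 h4 h5 h6.
pose q := [set a; b; c; d].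
have q4 : #|q| = 4 by rewrite card4.
case: Hr => _ /(_ q q4).
pose C := collinear_triples B.
pose S := [set t in C | t \subset q].
have ES : S = (fun z => q :\ z) @: [set z in q | q :\ z \in C].
  apply/setP => t; rewrite inE; apply/andP/imsetP.
  - case=> tC tq.
    have t3 : #|t| = 3 by move: tC; rewrite inE => /andP [/eqP].
    have : #|q :\: t| == 1 by rewrite cardsD (setIidPr tq) q4 t3.
    case/cards1P => z hz.
    have : z \in q :\: t by rewrite hz set11.
    rewrite inE => /andP [zt zq].
    have et : t = q :\ z by rewrite -hz setDDr setDv set0U (setIidPr tq).
    by exists z; rewrite // inE zq -et.
  - case=> z; rewrite inE => /andP [zq zC] ->; split => //; exact: subD1set.
have cS : #|S| = \sum_(z in q) (q :\ z \in C).
  rewrite ES card_in_imset.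
    rewrite -sum1_card (eq_bigl (fun z => (z \in q) && (q :\ z \in C))) => [|z]; last by rewrite inE.
    by rewrite big_mkcondr /=; apply: eq_bigr => z _; case: ifP.
  move=> z1 z2; rewrite !inE => /andP[q1 _] /andP[q2 _] e.
  have : z1 \notin q :\ z1 by rewrite !inE eqxx.
  by rewrite e !inE q1 andbT negbK => /eqP.
have eq : q = a |: (b |: (c |: [set d])) by rewrite /q; setsolve.
have n1 : a \notin b |: (c |: [set d]) by rewrite !inE; neqs; rwneqs.
have n2 : b \notin c |: [set d] by rewrite !inE; neqs; rwneqs.
have n3 : c \notin [set d] by rewrite !inE; neqs; rwneqs.
have Ea : q :\ a = [set b; c; d] by rewrite /q; setsolve.
have Eb : q :\ b = [set a; c; d] by rewrite /q; setsolve.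
have Ec : q :\ c = [set a; b; d] by rewrite /q; setsolve.
have Ed : q :\ d = [set a; b; c] by rewrite /q; setsolve.
have cS' : #|S| = coh B b c d + (coh B a c d + (coh B a b d + coh B a b c)).
  rewrite cS {1}eq big_setU1 // big_setU1 // big_setU1 // big_set1 /=.
  by rewrite Ea Eb Ec Ed.
rewrite -/C -/S cS' !inE => hh.
have : ~~ odd (coh B b c d + (coh B a c d + (coh B a b d + coh B a b c))).
  by case/orP: hh => [/eqP ->|/orP[] /eqP ->].
rewrite !oddD !oddb.
by case: (coh B a b c); case: (coh B a b d); case: (coh B a c d); case: (coh B b c d).
Qed.

Lemma exists_noncoh u v : u != v -> exists e, [/\ e != u, e != v & ~~ coh B e u v].
Proof.
move=> huv.
case: (boolP [exists e, [&& e != u, e != v & ~~ coh B e u v]]) => [/existsP [e /and3P[*]]|hno].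
  by exists e.
exfalso.
pose S (b : {set T}) := [set u; v] \subset b.
pose F b := if 0 < B b then b :\: [set u; v] else set0.
have cov : [set: T] \subset [set u; v] :|: \bigcup_(b | S b) F b.
  apply/subsetP => e _; rewrite inE; case: (boolP (e \in [set u; v])) => //= he.
  have hc : coh B e u v.
    move/existsPn: hno => /(_ e); move: he; rewrite !inE negb_or => /andP[-> ->] /=.
    by rewrite negbK.
  case: (line_of hc) => b hb [eb ub vb].
  apply/bigcupP; exists b.
    by rewrite /S; apply/subsetP => w; rewrite !inE => /orP[] /eqP ->.
  by rewrite /F hb inE eb he.
have h1 := subset_leq_card cov; rewrite cardsT in h1.
have h2 : #|\bigcup_(b | S b) F b| <= \sum_(b | S b) 2 * B b.
  apply: (big_ind2 (fun (A : {set T}) n => #|A| <= n)).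
  - by rewrite cards0.
  - move=> A1 n1 A2 n2 i1 i2.
    exact: leq_trans (leq_card_setU A1 A2).1 (leq_add i1 i2).
  - move=> b sb; rewrite /F; case: ifP => hb; last by rewrite cards0.
    by rewrite cardsD (setIidPr sb) line_card // cards2 huv B01 hb.
have h3 : \sum_(b | S b) 2 * B b = 2 * lam.
  rewrite -big_distrr /=; congr (2 * _).
  by case: Hd => _; apply; rewrite cards2 huv.
have h4 := (leq_card_setU [set u; v] (\bigcup_(b | S b) F b)).1.
rewrite cards2 huv in h4.
lia.
Qed.

Lemma main_line a b c d : a != b -> a != c -> a != d -> b != c -> b != d -> c != d ->
  coh B a b c -> coh B a b d -> coh B a c d -> coh B b c d ->
  (forall e, e \notin [set a; b; c; d] -> ~~ odd (cnt B e a b c d)) ->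
  0 < B [set a; b; c; d].
Proof.
move=> h1 h2 h3 h4 h5 h6 cabc cabd cacd cbcd He.
case: (line_of cabc) => L hL [aL bL cL].
case: (line_enum hL h1 h2 h4 aL bL cL) => x [xa xb xc] EL.
have [exd|xd] := eqVneq x d; first by rewrite -exd -EL.
have xq : x \notin [set a; b; c; d] by rewrite !inE; neqs; rwneqs.
have cx1 : coh B x a b by apply: (coh_line hL); rewrite // EL !inE eqxx ?orbT.
have cx2 : coh B x a c by apply: (coh_line hL); rewrite // EL !inE eqxx ?orbT.
have cx3 : coh B x b c by apply: (coh_line hL); rewrite // EL !inE eqxx ?orbT.
have P1 := par4 xa xb xd h1 h3 h5.
have P2 := par4 xa xc xd h2 h3 h6.
have Hx := He x xq.
have cxd : [&& coh B x a d, coh B x b d & coh B x c d].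
  move: P1 P2 Hx; rewrite /cnt cx1 cx2 cx3 cabd cacd !oddD !oddb.
  by case: (coh B x a d); case: (coh B x b d); case: (coh B x c d).
case/and3P: cxd => cxad cxbd cxcd.
have dx : d != x by rewrite eq_sym.
case: (exists_noncoh dx) => e [ed ex ne].
have cadx : coh B a d x by rewrite coh12 coh23 coh12 coh23.
have cbdx : coh B b d x by rewrite coh12 coh23 coh12 coh23.
have ccdx : coh B c d x by rewrite coh12 coh23 coh12 coh23.
have ea : e != a by apply/eqP => eea; move: ne; rewrite eea cadx.
have eb : e != b by apply/eqP => eeb; move: ne; rewrite eeb cbdx.
have ec : e != c by apply/eqP => eec; move: ne; rewrite eec ccdx.
have eq : e \notin [set a; b; c; d] by rewrite !inE; neqs; rwneqs.
have He' := He e eq.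
have HL : ~~ odd (cnt B e a b c x).
  apply: (even_cnt_line hL) => //; rewrite ?EL ?inE ?eqxx ?orbT //; by rewrite eq_sym.
have Q1 := par4 ea eb ec h1 h2 h4.
have ax : a != x by rewrite eq_sym.
have bx : b != x by rewrite eq_sym.
have cx : c != x by rewrite eq_sym.
have Q2 := par4 ea ed ex h3 ax dx.
have Q3 := par4 eb ed ex h5 bx dx.
have Q4 := par4 ec ed ex h6 cx dx.
move: He' HL Q1 Q2 Q3 Q4 ne; rewrite /cnt cabc cadx cbdx ccdx !oddD !oddb.
by case: (coh B e a b); case: (coh B e a c); case: (coh B e b c);
  case: (coh B e a d); case: (coh B e b d); case: (coh B e c d);
  case: (coh B e a x); case: (coh B e b x); case: (coh B e c x); case: (coh B e d x).
Qed.

Lemma pick3 (A : {set T}) : 3 <= #|A| ->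
  exists x y z, [/\ x != y, x != z, y != z & [&& x \in A, y \in A & z \in A]].
Proof.
move=> hA.
have /card_gt0P [x xA] : 0 < #|A| by lia.
have hA1 : 2 <= #|A :\ x| by move: hA; rewrite (cardsD1 x A) xA; lia.
have /card_gt0P [y yA] : 0 < #|A :\ x| by lia.
have hA2 : 1 <= #|A :\ x :\ y| by move: hA1; rewrite (cardsD1 y (A :\ x)) yA; lia.
have /card_gt0P [z zA] : 0 < #|A :\ x :\ y| by lia.
move: yA zA; rewrite !inE => /andP[yx yA] /andP[zy /andP[zx zA]].
by exists x, y, z; split; rewrite ?xA ?yA ?zA // eq_sym.
Qed.

Lemma line_char q : (0 < B q) <-> Char B q.
Proof.
split.
  move=> hq.
  have : 3 <= #|q| by rewrite line_card.
  case/pick3 => x [y [z [h1 h2 h3 /and3P [xq yq zq]]]].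
  case: (line_enum hq h1 h2 h3 xq yq zq) => w [wx wy wz] Eq.
  have h4 : x != w by rewrite eq_sym.
  have h5 : y != w by rewrite eq_sym.
  have h6 : z != w by rewrite eq_sym.
  have wq : w \in q by rewrite Eq !inE eqxx ?orbT.
  exists x, y, z, w; split => //.
  - by rewrite h1 h2 h3 h4 h5 h6.
  - apply/and4P; split; exact: (coh_line hq).
  - move=> e; rewrite !inE !negb_or => /andP[/andP[/andP[ex ey] ez] ew].
    exact: (even_cnt_line hq).
case=> a [b [c [d [hn Eq hc He]]]].
case/and3P: hn => h1 h2 /and4P[h3 h4 h5 h6]; case/and4P: hc => c1 c2 c3 c4.
by rewrite Eq; apply: main_line.
Qed.
End Design.


Lemma coh_d12 (T : finType) (B : {set T} -> nat) x z : coh B x x z = false.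
Proof. by apply/negP => /coh_neq []; rewrite eqxx. Qed.
Lemma coh_d13 (T : finType) (B : {set T} -> nat) x y : coh B x y x = false.
Proof. by apply/negP => /coh_neq []; rewrite eqxx. Qed.
Lemma coh_d23 (T : finType) (B : {set T} -> nat) x y : coh B x y y = false.
Proof. by apply/negP => /coh_neq []; rewrite eqxx. Qed.

Lemma char_transport (T1 T2 : finType) (B1 : {set T1} -> nat) (B2 : {set T2} -> nat)
  (f : T1 -> T2) (g : T2 -> T1) :
  cancel g f -> injective f ->
  (forall x y z, coh B2 (f x) (f y) (f z) = coh B1 x y z) ->
  forall q, Char B1 q -> Char B2 (f @: q).
Proof.
move=> gK finj hc q [a [b [c [d [hn Eq hcoh He]]]]].
exists (f a), (f b), (f c), (f d); split.
- by rewrite !(inj_eq finj).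
- by rewrite Eq !imsetU !imset_set1.
- by rewrite !hc.
- move=> e he.
  have he' : g e \notin [set a; b; c; d].
    apply: contra he => hm; rewrite -(gK e).
    by move: hm; rewrite !inE => /orP[/orP[/orP[]|]|] /eqP ->; rewrite eqxx ?orbT.
  by rewrite -(gK e) /cnt !hc; apply: He.
Qed.

Definition ext (T1 T2 : finType) (inf1 : T1) (inf2 : T2) (g : dvertex inf1 -> dvertex inf2)
  (x : T1) : T2 :=
  match (insub x : option (dvertex inf1)) with Some y => val (g y) | None => inf2 end.

Lemma ext_inf (T1 T2 : finType) (inf1 : T1) (inf2 : T2) (g : dvertex inf1 -> dvertex inf2) :
  ext g inf1 = inf2.
Proof. by rewrite /ext; case: insubP => [y hy _|//]; rewrite eqxx in hy. Qed.

Lemma ext_val (T1 T2 : finType) (inf1 : T1) (inf2 : T2) (g : dvertex inf1 -> dvertex inf2)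
  (y : dvertex inf1) : ext g (val y) = val (g y).
Proof. by rewrite /ext valK. Qed.

Lemma ext_K (T1 T2 : finType) (inf1 : T1) (inf2 : T2) (g : dvertex inf1 -> dvertex inf2)
  (g' : dvertex inf2 -> dvertex inf1) : cancel g g' -> cancel (ext g) (ext g').
Proof.
move=> gK x; have [->|hx] := eqVneq x inf1; first by rewrite !ext_inf.
have -> : x = val (exist _ x hx : dvertex inf1) by [].
by rewrite !ext_val gK.
Qed.

Lemma ext_neq (T1 T2 : finType) (inf1 : T1) (inf2 : T2) (g : dvertex inf1 -> dvertex inf2)
  x : x != inf1 -> ext g x != inf2.
Proof.
move=> hx; have -> : x = val (exist _ x hx : dvertex inf1) by [].
by rewrite ext_val; case: (g _).
Qed.

Lemma ext_coh (T1 T2 : finType) (B1 : {set T1} -> nat) (B2 : {set T2} -> nat)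
  (inf1 : T1) (inf2 : T2) (g : dvertex inf1 -> dvertex inf2) (g' : dvertex inf2 -> dvertex inf1) :
  regular_two_graph (collinear_triples B1) -> regular_two_graph (collinear_triples B2) ->
  cancel g g' ->
  (forall a b, derived_adj B1 inf1 a b = derived_adj B2 inf2 (g a) (g b)) ->
  forall x y z, coh B2 (ext g x) (ext g y) (ext g z) = coh B1 x y z.
Proof.
move=> Hr1 Hr2 gK Hg.
have finj : injective (ext g) := can_inj (ext_K gK).
have adj : forall y z, y != inf1 -> z != inf1 -> coh B2 inf2 (ext g y) (ext g z) = coh B1 inf1 y z.
  move=> y z hy hz.
  have -> : y = val (exist _ y hy : dvertex inf1) by [].
  have -> : z = val (exist _ z hz : dvertex inf1) by [].
  rewrite !ext_val; exact: (esym (Hg _ _)).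
move=> x y z.
have [<-|nxy] := eqVneq x y; first by rewrite !coh_d12.
have [<-|nxz] := eqVneq x z; first by rewrite !coh_d13.
have [<-|nyz] := eqVneq y z; first by rewrite !coh_d23.
have [ex|hx] := eqVneq x inf1.
  subst x; rewrite ext_inf; apply: adj; by rewrite eq_sym.
have [ey|hy] := eqVneq y inf1.
  subst y; rewrite (coh12 B1) (coh12 B2) ext_inf; apply: adj => //; by rewrite eq_sym.
have [ez|hz] := eqVneq z inf1.
  subst z; rewrite (coh23 B1) (coh12 B1) (coh23 B2) (coh12 B2) ext_inf; exact: adj.
have P1 := par4 Hr1 (a := inf1) (b := x) (c := y) (d := z).
have P2 := par4 Hr2 (a := inf2) (b := ext g x) (c := ext g y) (d := ext g z).
move: P1 P2; rewrite !(inj_eq finj) nxy nxz nyz !(eq_sym inf1) hx hy hz.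
rewrite !(eq_sym inf2) !ext_neq // !adj //.
move=> /(_ isT isT isT isT isT isT) P1 /(_ isT isT isT isT isT isT) P2.
move: P1 P2; rewrite !oddD !oddb.
by case: (coh B1 inf1 x y); case: (coh B1 inf1 x z); case: (coh B1 inf1 y z);
  case: (coh B1 x y z); case: (coh B2 (ext g x) (ext g y) (ext g z)).
Qed.

Theorem lemma6p5 (T1 T2 : finType) (B1 : {set T1} -> nat) (B2 : {set T2} -> nat)
  (lam1 lam2 : nat) (inf1 : T1) (inf2 : T2) :
  is_2design 4 lam1 B1 -> supersimple B1 -> prop_triangle B1 ->
  regular_two_graph (collinear_triples B1) -> 2 * lam1 + 2 < #|T1| ->
  is_2design 4 lam2 B2 -> supersimple B2 -> prop_triangle B2 ->
  regular_two_graph (collinear_triples B2) -> 2 * lam2 + 2 < #|T2| ->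
  graph_isomorphic (derived_adj B1 inf1) (derived_adj B2 inf2) ->
  design_isomorphic B1 B2.
Proof.
move=> Hd1 Hs1 Ht1 Hr1 Hn1 Hd2 Hs2 Ht2 Hr2 Hn2 [g [[g' gK g'K] Hg]].
have Hg' : forall a b, derived_adj B2 inf2 a b = derived_adj B1 inf1 (g' a) (g' b).
  by move=> a b; rewrite Hg !g'K.
have fK : cancel (ext g) (ext g') := ext_K gK.
have hK : cancel (ext g') (ext g) := ext_K g'K.
have cf := ext_coh Hr1 Hr2 gK Hg.
have ch := ext_coh Hr2 Hr1 g'K Hg'.
exists (ext g); split; first by exists (ext g').
move=> b; rewrite (B01 Hs2) (B01 Hs1); congr nat_of_bool.
apply/idP/idP => hb.
  have : Char B1 (ext g' @: (ext g @: b)).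
    apply: (char_transport fK) => //; first exact: can_inj hK.
    exact/(line_char Hd2 Hs2 Ht2 Hr2 Hn2).
  rewrite -imset_comp (eq_imset _ fK) imset_id.
  by move/(line_char Hd1 Hs1 Ht1 Hr1 Hn1).
apply/(line_char Hd2 Hs2 Ht2 Hr2 Hn2).
apply: (char_transport hK) => //; first exact: can_inj fK.
exact/(line_char Hd1 Hs1 Ht1 Hr1 Hn1).
Qed.
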